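(* For any uplink zero-forcing message passing decoding scheme in the locally connected network with connectivity parameter $L$, and any two decoding pairs $(\text{MT } i_1,\text{BS } j_1)$ and $(\text{MT } i_2,\text{BS } j_2)$, we have $i_1>i_2$ if and only if $j_1>j_2$.
   Context: Network: $K$ base stations BS $1,\dots,K$ and $K$ mobile terminals MT $1,\dots,K$, single-antenna; the channel coefficient $H_{i,j}$ between MT $i$ and BS $j$ is zero iff $i\notin\{j,\dots,j+L\}$, nonzero coefficients generic (drawn from a continuous joint distribution). Uplink: BS $j$ receives $Y_j=\sum_iH_{i,j}X_i+Z_j$. MT $i$ has message $W_i$ and is associated with a set $\mathcal C_i\subseteq[K]$ of base stations, $|\mathcal C_i|\le N_c$. Zero-forcing message passing decoding: each message is decoded at at most one base station; a decoded message is passed over the backhaul to the other base stations in its association set, which use it only to cancel its interference. The pair (MT $j$, BS $i$) is a decoding pair if $i\in\mathcal C_j$ and, given the messages $B_i$ that BS $i$ has received over the backhaul, the noiseless signal $Y_i-Z_i$ depends on $W_j$ and on no other message, so $W_j$ is decoded at BS $i$. *)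

(* Defs.v *)
From mathcomp Require Import all_boot all_order all_algebra.
Set Implicit Arguments. Unset Strict Implicit. Unset Printing Implicit Defensive.
Import GRing.Theory.
Local Open Scope ring_scope.

(* Indices: MTs and BSs are 'I_K (0-based).  H i j is the channel coefficient
   between MT i and BS j. *)

Definition locally_connected (R : nzRingType) (K L : nat) (H : 'M[R]_K) : Prop :=
  forall (i j : 'I_K), H i j != 0 <-> (j <= i <= j + L)%N.

Definition noiseless_signal (R : nzRingType) (K : nat) (H : 'M[R]_K) (j : 'I_K)
  (x : 'I_K -> R) : R := \sum_(k < K) H k j * x k.

Definition depends_on (R : nzRingType) (K : nat) (H : 'M[R]_K) (j k : 'I_K) : Prop :=
  exists x x' : 'I_K -> R, (forall l, l != k -> x l = x' l) /\
    noiseless_signal H j x != noiseless_signal H j x'.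

Definition zf_decodable (R : nzRingType) (K : nat) (H : 'M[R]_K)
  (B : {set 'I_K}) (j m : 'I_K) : Prop :=
  forall k : 'I_K, k \notin B -> (depends_on H j k <-> k = m).

(* A zero-forcing message passing decoding scheme: association sets and a
   decoding order, a sequence of (MT, BS) pairs: message of MT m is decoded at
   BS b, in this order. *)
Record zf_scheme (K : nat) := ZFScheme {
  assoc : 'I_K -> {set 'I_K};
  dorder : seq ('I_K * 'I_K)
}.

Definition backhaul (K : nat) (S : zf_scheme K) (t : nat) (b : 'I_K) : {set 'I_K} :=
  [set m | has (fun p : 'I_K * 'I_K => (p.1 == m) && (b \in assoc S p.1))
               (take t (dorder S))].

Definition valid_zf_scheme (R : nzRingType) (K Nc : nat) (H : 'M[R]_K)
  (S : zf_scheme K) : Prop :=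
  [/\ forall m : 'I_K, (#|assoc S m| <= Nc)%N,
      uniq (map fst (dorder S))
    & forall t : nat, (t < size (dorder S))%N ->
        forall p : 'I_K * 'I_K, nth p (dorder S) t = p ->
          p.2 \in assoc S p.1 /\ zf_decodable H (backhaul S t p.2) p.2 p.1].

Definition decoding_pair (K : nat) (S : zf_scheme K) (i j : 'I_K) : Prop :=
  (i, j) \in dorder S.

(* Main.v *)
Require Import Defs.
From mathcomp Require Import all_boot all_order all_algebra.
From mathcomp Require Import zify.
Import GRing.Theory.
Set Implicit Arguments. Unset Strict Implicit.

Lemma dep_iff (R : nzRingType) K (H : 'M[R]_K) j k :
  depends_on H j k <-> (H k j != 0)%R.
Proof.
split.
- case=> x [x' [hx hne]]. apply/negP => /eqP h0. move/negP: hne; apply.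
  apply/eqP. rewrite /noiseless_signal. apply: eq_bigr => l _.
  case: (eqVneq l k) => [->|hl]; first by rewrite h0 !mul0r. by rewrite hx.
- move=> hnz. exists (fun _ => 0%R), (fun l => if l == k then 1%R else 0%R). split.
  + move=> l hl. by rewrite (negbTE hl).
  + rewrite /noiseless_signal.
    have -> : (\sum_(k0 < K) H k0 j * 0 = 0)%R by rewrite big1 // => l _; rewrite mulr0.
    rewrite (bigD1 k) //= eqxx mulr1 big1 ?addr0; last first.
      by move=> l /negbTE ->; rewrite mulr0.
    by rewrite eq_sym.
Qed.

Lemma bh_pos K (S : zf_scheme K) t b k :
  k \in backhaul S t b -> (index k (map fst (dorder S)) < t)%N.
Proof.
rewrite inE => /hasP [p hp /andP [/eqP hk _]].
have hm : k \in take t (map fst (dorder S)).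
  by rewrite -map_take; apply/mapP; exists p.
rewrite -(cat_take_drop t (map fst (dorder S))) index_cat hm.
have := index_mem k (take t (map fst (dorder S))); rewrite hm => h.
apply: leq_trans h _. rewrite size_take_min. exact: geq_minl.
Qed.

Lemma pos_eq K (S : zf_scheme K) (p : 'I_K * 'I_K) :
  p \in dorder S -> uniq (map fst (dorder S)) ->
  index p.1 (map fst (dorder S)) = index p (dorder S).
Proof.
move=> hp hu. have ht := index_mem p (dorder S). rewrite hp in ht.
have hn := nth_index p hp.
rewrite -{1}hn -(nth_map p p.1 fst) //.
apply: index_uniq => //. by rewrite size_map.
Qed.

Section X.
Variables (R : fieldType) (K L Nc : nat) (H : 'M[R]_K)
  (hH : locally_connected L H) (S : zf_scheme K)
  (hS : valid_zf_scheme Nc H S).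

Lemma win_lem (i j k : 'I_K) : (i, j) \in dorder S -> k != i ->
  (j <= k <= j + L)%N ->
  (index k (map fst (dorder S)) < index i (map fst (dorder S)))%N.
Proof.
move=> hp hki hw. case: hS => _ hu hdec.
have ht := index_mem (i, j) (dorder S). rewrite hp in ht.
have [_ hd] := hdec _ ht (i, j) (nth_index _ hp). simpl in hd.
rewrite (pos_eq hp hu) /=.
case: (boolP (k \in backhaul S (index (i, j) (dorder S)) j)) => hk.
  exact: bh_pos hk.
have := (hd k hk).1 ((dep_iff H j k).2 ((hH k j).2 hw)).
by move=> e; rewrite e eqxx in hki.
Qed.

Lemma inwin (i j : 'I_K) : (i, j) \in dorder S -> (j <= i <= j + L)%N.
Proof.
move=> hp. case: hS => _ hu hdec.
have ht := index_mem (i, j) (dorder S). rewrite hp in ht.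
have [_ hd] := hdec _ ht (i, j) (nth_index _ hp). simpl in hd.
case: (boolP (i \in backhaul S (index (i, j) (dorder S)) j)) => hk.
  have := bh_pos hk. by rewrite (pos_eq hp hu) /= ltnn.
apply/(hH i j). apply/(dep_iff H j i). exact: (hd i hk).2.
Qed.

Lemma key (a b c d : 'I_K) : (a, b) \in dorder S -> (c, d) \in dorder S ->
  (a : nat) <> c -> (b <= c <= b + L)%N -> (d <= a <= d + L)%N -> False.
Proof.
move=> h1 h2 hne w1 w2.
have n1 : c != a by apply/eqP => e; apply: hne; rewrite e.
have n2 : a != c by apply/eqP => e; apply: hne; rewrite e.
have := win_lem h1 n1 w1. have := win_lem h2 n2 w2. lia.
Qed.

End X.

Theorem corollary1 (R : fieldType) (K L Nc : nat) (H : 'M[R]_K)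
  (hH : locally_connected L H) (S : zf_scheme K)
  (hS : valid_zf_scheme Nc H S) (i1 j1 i2 j2 : 'I_K) :
  decoding_pair S i1 j1 -> decoding_pair S i2 j2 ->
  ((i2 < i1)%N <-> (j2 < j1)%N).
Proof.
rewrite /decoding_pair => h1 h2.
have w1 := inwin hH hS h1. have w2 := inwin hH hS h2.
have K1 := key hH hS h1 h2. have K2 := key hH hS h2 h1.
split => h.
- have [//|hj|hj] := ltngtP j2 j1.
  + exfalso; apply: K1; lia.
  + exfalso; apply: K1; lia.
- have [//|hi|hi] := ltngtP i2 i1.
  + exfalso; apply: K2; lia.
  + exfalso. move/val_inj: hi => hi; subst i2.
    case: hS => _ hu _.
    have e1 := pos_eq h1 hu. have e2 := pos_eq h2 hu. simpl in e1, e2.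
    rewrite e1 in e2.
    have := nth_index (i1, j1) h1. rewrite e2 (nth_index _ h2) => [[e]].
    rewrite e in h. by rewrite ltnn in h.
Qed.
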